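(* Let $b\in\mathbb B^d$ be fixed, $T>0$, and let $\phi_T$ and $G_T$ be the modified corrector and the Green's function. Then, as functions of $a\in\Omega$, $$\frac{\partial\phi_T(x=0)}{\partial a(b)}=-\nabla G_T(b,0)\big(\nabla\phi_T(b)+e(b)\big),$$ $$\frac{\partial}{\partial a(b)}\frac{\partial\phi_T(x=0)}{\partial a(b)}=-2\,\nabla\nabla G_T(b,b)\,\frac{\partial\phi_T(x=0)}{\partial a(b)},\qquad \frac{\partial}{\partial a(b)}\nabla\nabla G_T(b,b)=-\big(\nabla\nabla G_T(b,b)\big)^2.$$ Moreover, $\nabla\nabla G_T(b,b)>0$ and $1-a(b)\nabla\nabla G_T(b,b)>0$.
   Context: $\mathbb B^d$ is the set of nearest-neighbour bonds of $\mathbb Z^d$; $x_b,y_b$ endpoints of $b$ with $y_b-x_b\in\{e_1,\dots,e_d\}$; $\nabla u(b)=u(y_b)-u(x_b)$, $\nabla^*F(x)=\sum_i(F(\{x-e_i,x\})-F(\{x,x+e_i\}))$; $e\in\mathbb R^d$ is a fixed unit vector and $e(b)=e\cdot(y_b-x_b)$. $\Omega=[0,1]^{\mathbb B^d}$. The Green's function: for $a\in\Omega$ and $y\in\mathbb Z^d$, $x\mapsto G_T(a,x,y)$ is the unique $\ell^2(\mathbb Z^d)$ solution of $\frac1TG_T(a,\cdot,y)+\nabla^*(a\nabla G_T(a,\cdot,y))=\delta(\cdot-y)$. $\nabla G_T(b,0)$ is the gradient in the first variable at $b$ with $y=0$, and $\nabla\nabla G_T(b,b')=G_T(y_b,y_{b'})-G_T(x_b,y_{b'})-G_T(y_b,x_{b'})+G_T(x_b,x_{b'})$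 (gradient in both variables). The modified corrector $\phi_T(a,x)$ is the stationary (i.e. $\phi_T(a(\cdot+z),x)=\phi_T(a,x+z)$) field with finite second moment solving $\frac1T\phi_T+\nabla^*(a(\nabla\phi_T+e))=0$ for all $x\in\mathbb Z^d$ and $a\in\Omega$. $\partial/\partial a(b)$ denotes the classical partial derivative with respect to the coordinate $a(b)$ (all other coordinates fixed). *)

(* Defs.v *)
From Stdlib Require Import Reals ZArith List.
From Coquelicot Require Import Coquelicot.
From mathcomp Require Import ssreflect ssrbool eqtype ssrnat fintype.
Set Implicit Arguments.
Open Scope R_scope.

Definition Zd (d : nat) := 'I_d -> Z.
Definition origin (d : nat) : Zd d := fun _ => 0%Z.
Definition unitv (d : nat) (i : 'I_d) : Zd d :=
  fun k => if k == i then 1%Z else 0%Z.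
Definition addZd d (x y : Zd d) : Zd d := fun k => (x k + y k)%Z.
Definition subZd d (x y : Zd d) : Zd d := fun k => (x k - y k)%Z.
Definition Zd_eqb d (x y : Zd d) : bool := [forall k, Z.eqb (x k) (y k)].

(* Nearest-neighbour bonds: (x, i) is the bond {x, x + e_i}, so that
   x_b = x and y_b = x + e_i, with y_b - x_b = e_i. *)
Definition bond (d : nat) := (Zd d * 'I_d)%type.
Definition xb d (b : bond d) : Zd d := fst b.
Definition yb d (b : bond d) : Zd d := addZd (fst b) (unitv (snd b)).
Definition bond_eqb d (b b' : bond d) : bool :=
  Zd_eqb (fst b) (fst b') && (snd b == snd b').

Definition coeff (d : nat) := bond d -> R.
Definition in_Omega d (a : coeff d) : Prop := forall b, 0 <= a b <= 1.
Definition shift d (z : Zd d) (a : coeff d) : coeff d :=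
  fun b => a (addZd (fst b) z, snd b).
Definition upd d (a : coeff d) (b : bond d) (t : R) : coeff d :=
  fun b' => if bond_eqb b' b then t else a b'.

Definition grad d (u : Zd d -> R) (b : bond d) : R := u (yb b) - u (xb b).
Definition sum_dirs d (f : 'I_d -> R) : R := fold_right Rplus 0 (map f (enum 'I_d)).
Definition divstar d (F : bond d -> R) (x : Zd d) : R :=
  sum_dirs (fun i => F (subZd x (unitv i), i) - F (x, i)).
Definition delta d (x y : Zd d) : R := if Zd_eqb x y then 1 else 0.

(* e(b) = e . (y_b - x_b) for the fixed vector e = ev. *)
Definition ebond d (ev : 'I_d -> R) (b : bond d) : R := ev (snd b).
Definition is_unit_vector d (ev : 'I_d -> R) : Prop := sum_dirs (fun i => ev i ^ 2) = 1.

(* u in l^2(Z^d): square sums over finite sets of points are bounded. *)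
Definition ell2 d (u : Zd d -> R) : Prop :=
  exists M, forall s : list (Zd d), NoDup s ->
    fold_right Rplus 0 (map (fun x => u x ^ 2) s) <= M.

Definition is_Green d (T : R) (G : coeff d -> Zd d -> Zd d -> R) : Prop :=
  forall a, in_Omega a -> forall y,
    ell2 (fun x => G a x y) /\
    forall x, / T * G a x y + divstar (fun b => a b * grad (fun z => G a z y) b) x
              = delta x y.

Definition is_mod_corrector d (T : R) (ev : 'I_d -> R) (phi : coeff d -> Zd d -> R) : Prop :=
  (forall a z x, in_Omega a -> phi (shift z a) x = phi a (addZd x z)) /\
  (forall a, in_Omega a -> forall x,
     / T * phi a x + divstar (fun b => a b * (grad (phi a) b + ebond ev b)) x = 0) /\
  (forall a, in_Omega a -> exists C, forall x, Rabs (phi a x) <= C).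

(* Classical partial derivative with respect to the coordinate a(b),
   (one-sided at the endpoints of [0,1], since a ranges over Omega). *)
Definition has_pderiv d (F : coeff d -> R) (a : coeff d) (b : bond d) (l : R) : Prop :=
  filterlim (fun t => (F (upd a b t) - F a) / (t - a b))
    (within (fun t => 0 <= t <= 1 /\ t <> a b) (locally (a b))) (locally l).

Definition gradG d (G : coeff d -> Zd d -> Zd d -> R) a (b : bond d) (y : Zd d) : R :=
  G a (yb b) y - G a (xb b) y.
Definition ggG d (G : coeff d -> Zd d -> Zd d -> R) a (b b' : bond d) : R :=
  G a (yb b) (yb b') - G a (xb b) (yb b') - G a (yb b) (xb b') + G a (xb b) (xb b').

(* Main.v *)
Require Import Defs.
From Stdlib Require Import Reals Lra Lia Psatz ZArith List Classical FunctionalExtensionality.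
From Coquelicot Require Import Coquelicot.
From mathcomp Require Import ssreflect ssrbool eqtype ssrnat fintype seq.
Open Scope R_scope.
Set Implicit Arguments.

Definition sl {A : Type} (f : A -> R) (l : list A) : R := fold_right Rplus 0 (List.map f l).

Lemma sum_dirs_sl d (f : 'I_d -> R) : sum_dirs f = sl f (enum 'I_d).
Proof. reflexivity. Qed.

Lemma sl_nil {A} (f : A -> R) : sl f nil = 0. Proof. reflexivity. Qed.
Lemma sl_cons {A} (f : A -> R) x l : sl f (x :: l) = f x + sl f l. Proof. reflexivity. Qed.

Lemma sl_ext {A} (f g : A -> R) l : (forall i, f i = g i) -> sl f l = sl g l.
Proof. move=> H; elim: l => [|x l IH] //; rewrite !sl_cons H IH //. Qed.

Lemma sl_plus {A} (f g : A -> R) l : sl (fun i => f i + g i) l = sl f l + sl g l.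
Proof. elim: l => [|x l IH]; [rewrite !sl_nil; ring| rewrite !sl_cons IH; ring]. Qed.

Lemma sl_minus {A} (f g : A -> R) l : sl (fun i => f i - g i) l = sl f l - sl g l.
Proof. elim: l => [|x l IH]; [rewrite !sl_nil; ring| rewrite !sl_cons IH; ring]. Qed.

Lemma sl_scal {A} (c : R) (f : A -> R) l : sl (fun i => c * f i) l = c * sl f l.
Proof. elim: l => [|x l IH]; [rewrite !sl_nil; ring| rewrite !sl_cons IH; ring]. Qed.

Lemma sl_zero {A} l : sl (fun _ : A => 0) l = 0.
Proof. elim: l => [|x l IH]; [rewrite !sl_nil; ring| rewrite !sl_cons IH; ring]. Qed.

Lemma sl_ge {A} (f : A -> R) c l : (forall i, c <= f i) -> INR (size l) * c <= sl f l.
Proof.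
move=> H; elim: l => [|x l IH]; first (rewrite sl_nil /=; lra).
rewrite sl_cons; have -> : INR (size (x :: l)) = INR (size l) + 1 by rewrite -S_INR. have := H x; lra.
Qed.

Lemma sl_notin {T : eqType} (f : T -> R) j (l : list T) : j \notin l ->
  sl (fun i => if i == j then f i else 0) l = 0.
Proof.
elim: l => [|x l IH] //=. rewrite in_cons negb_or => /andP [H1 H2].
rewrite sl_cons IH //. rewrite eq_sym (negbTE H1). ring.
Qed.

Lemma sl_single {T : eqType} (f : T -> R) j (l : list T) : uniq l -> j \in l ->
  sl (fun i => if i == j then f i else 0) l = f j.
Proof.
elim: l => [|x l IH] //=. move=> /andP [Hx Hu]. rewrite in_cons => /orP [/eqP Hj|Hj].
- subst x. rewrite sl_cons sl_notin // eqxx. ring.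
- rewrite sl_cons IH //. have -> : (x == j) = false.
  { apply/negP => /eqP E; subst x; by rewrite Hj in Hx. } ring.
Qed.

Lemma sum_dirs_single d (f : 'I_d -> R) j : sum_dirs (fun i => if i == j then f i else 0) = f j.
Proof. rewrite sum_dirs_sl; apply sl_single; [apply enum_uniq| by rewrite mem_enum]. Qed.

Lemma Zd_eqbP d (x y : Zd d) : Zd_eqb x y = true <-> x = y.
Proof.
rewrite /Zd_eqb; split.
- move=> /forallP H; apply functional_extensionality => k; have := H k; by move/Z.eqb_eq.
- move=> ->; apply/forallP => k; apply Z.eqb_refl.
Qed.

Lemma Zd_eqb_refl d (x : Zd d) : Zd_eqb x x = true.
Proof. by apply/Zd_eqbP. Qed.

Lemma Zd_eqb_sym d (x y : Zd d) : Zd_eqb x y = Zd_eqb y x.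
Proof.
case E1: (Zd_eqb x y); case E2: (Zd_eqb y x) => //.
- move/Zd_eqbP: E1 => E; subst; by rewrite Zd_eqb_refl in E2.
- move/Zd_eqbP: E2 => E; subst; by rewrite Zd_eqb_refl in E1.
Qed.

Lemma delta_sym d (x y : Zd d) : delta x y = delta y x.
Proof. by rewrite /delta Zd_eqb_sym. Qed.

Lemma delta_eq d (x : Zd d) : delta x x = 1.
Proof. by rewrite /delta Zd_eqb_refl. Qed.

Lemma delta_neq d (x y : Zd d) : x <> y -> delta x y = 0.
Proof. move=> H; rewrite /delta; case E: (Zd_eqb x y) => //; by move/Zd_eqbP: E. Qed.

Lemma add_sub d (x : Zd d) i : addZd (subZd x (unitv i)) (unitv i) = x.
Proof. apply functional_extensionality => k; rewrite /addZd /subZd; lia. Qed.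

Lemma sub_add_iff d (x p : Zd d) i : subZd x (unitv i) = p <-> x = addZd p (unitv i).
Proof.
split=> H.
- apply functional_extensionality => k; rewrite -H /addZd /subZd; lia.
- apply functional_extensionality => k; rewrite H /addZd /subZd; lia.
Qed.

Lemma add_neq d (p : Zd d) i : addZd p (unitv i) <> p.
Proof.
move=> H; have := f_equal (fun f => f i) H; rewrite /addZd /unitv eqxx; lia.
Qed.

Lemma yb_sub d (x : Zd d) i : yb (subZd x (unitv i), i) = x.
Proof. apply add_sub. Qed.

Lemma bond_eqbP d (b b' : bond d) : bond_eqb b' b = true <-> b' = b.
Proof.
case: b => x i; case: b' => x' i'; rewrite /bond_eqb /=; split.
- move=> /andP [/Zd_eqbP -> /eqP ->] //.
- case=> -> ->; apply/andP; split; [by apply/Zd_eqbP | by []].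
Qed.

Definition Lop d T (a : coeff d) (u : Zd d -> R) (x : Zd d) : R :=
  / T * u x + divstar (fun b => a b * grad u b) x.

Definition hfun d (b : bond d) (x : Zd d) : R := delta x (yb b) - delta x (xb b).

Lemma divstar_plus d (F H : bond d -> R) x :
  divstar (fun b => F b + H b) x = divstar F x + divstar H x.
Proof.
rewrite /divstar !sum_dirs_sl -sl_plus; apply sl_ext => i; ring.
Qed.

Lemma Zd_eqb_sub d (x p : Zd d) j :
  Zd_eqb (subZd x (unitv j)) p = Zd_eqb x (addZd p (unitv j)).
Proof.
apply/idP/idP => /Zd_eqbP H; apply/Zd_eqbP; by apply sub_add_iff.
Qed.

Lemma divstar_pert d (a : coeff d) b t (F : bond d -> R) x :
  divstar (fun b' => upd a b t b' * F b') x
  = divstar (fun b' => a b' * F b') x + (t - a b) * F b * hfun b x.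
Proof.
case: b => p j.
set C := (t - a (p, j)) * F (p, j).
pose f := fun i => ((if Zd_eqb (subZd x (unitv i)) p then C else 0) - (if Zd_eqb x p then C else 0)).
have E : forall i,
  upd a (p, j) t (subZd x (unitv i), i) * F (subZd x (unitv i), i) - upd a (p, j) t (x, i) * F (x, i)
  = (a (subZd x (unitv i), i) * F (subZd x (unitv i), i) - a (x, i) * F (x, i))
    + (if i == j then f i else 0).
{ move=> i. rewrite /f /upd /bond_eqb /=. case: (i =P j) => [->|Hij].
  - rewrite !andbT. case E1: (Zd_eqb (subZd x (unitv j)) p); case E2: (Zd_eqb x p).
    + move/Zd_eqbP: E1 => E1; move/Zd_eqbP: E2 => E2. rewrite /C E1 E2; ring.
    + move/Zd_eqbP: E1 => E1. rewrite /C E1; ring.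
    + move/Zd_eqbP: E2 => E2. rewrite /C E2; ring.
    + ring.
  - rewrite !andbF; ring. }
rewrite /divstar !sum_dirs_sl (sl_ext _ _ _ E) sl_plus (sl_single f j); [|apply enum_uniq| by rewrite mem_enum].
rewrite /f.
rewrite Zd_eqb_sub /hfun /delta /yb /xb /=.
case: (Zd_eqb x (addZd p (unitv j))); case: (Zd_eqb x p); rewrite -/C; ring.
Qed.

Lemma Lop_pert d T (a : coeff d) b t u x :
  Lop T (upd a b t) u x = Lop T a u x + (t - a b) * grad u b * hfun b x.
Proof. rewrite /Lop divstar_pert; ring. Qed.

Definition lsum d (L : list (R * Zd d)) (u : Zd d -> R) : R := sl (fun p => fst p * u (snd p)) L.

Definition lst d T (a : coeff d) (x : Zd d) : list (R * Zd d) :=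
  (/ T, x) :: flat_map (fun i =>
     (a (subZd x (unitv i), i), addZd (subZd x (unitv i)) (unitv i))
     :: (- a (subZd x (unitv i), i), subZd x (unitv i))
     :: (- a (x, i), addZd x (unitv i)) :: (a (x, i), x) :: nil) (enum 'I_d).

Lemma Lop_rep d T (a : coeff d) u x : Lop T a u x = lsum (lst T a x) u.
Proof.
rewrite /Lop /lsum /lst sl_cons /divstar sum_dirs_sl /=. congr (_ + _).
elim: (enum 'I_d) => [|i l IH] //=.
rewrite sl_cons IH /grad /yb /xb /= /sl /=. ring.
Qed.

Lemma lsum_lin d L (al be : R) (u v : Zd d -> R) :
  lsum L (fun z => al * u z + be * v z) = al * lsum L u + be * lsum L v.
Proof.
rewrite /lsum -!sl_scal -sl_plus; apply sl_ext => p; ring.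
Qed.

Lemma Lop_lin d T (a : coeff d) (al be : R) u v x :
  Lop T a (fun z => al * u z + be * v z) x = al * Lop T a u x + be * Lop T a v x.
Proof. rewrite !Lop_rep; apply lsum_lin. Qed.

Lemma Lop_zero d T (a : coeff d) x : Lop T a (fun _ => 0) x = 0.
Proof.
rewrite Lop_rep /lsum (sl_ext _ (fun _ => 0)) ?sl_zero // => p; ring.
Qed.

Lemma Lop_opp d T (a : coeff d) u x : Lop T a (fun z => - u z) x = - Lop T a u x.
Proof.
have := Lop_lin T a (-1) 0 u u x.
have -> : (fun z => -1 * u z + 0 * u z) = (fun z => - u z).
{ apply functional_extensionality => z; ring. }
move=> ->; ring.
Qed.

Lemma Lop_sub d T (a : coeff d) u v x : Lop T a (fun z => u z - v z) x = Lop T a u x - Lop T a v x.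
Proof.
have := Lop_lin T a 1 (-1) u v x.
have -> : (fun z => 1 * u z + -1 * v z) = (fun z => u z - v z).
{ apply functional_extensionality => z; ring. }
move=> ->; ring.
Qed.

Lemma lsum_bound d L (u : Zd d -> R) B : (forall z, Rabs (u z) <= B) ->
  Rabs (lsum L u) <= sl (fun p => Rabs (fst p)) L * B.
Proof.
move=> H; rewrite /lsum; elim: L => [|p L IH].
- rewrite !sl_nil Rabs_R0; have := H (fun _ => 0%Z); have := Rabs_pos (u (fun _ => 0%Z)); lra.
- rewrite !sl_cons. apply (Rle_trans _ _ _ (Rabs_triang _ _)). rewrite Rabs_mult.
  have := Rmult_le_compat_l (Rabs (fst p)) _ _ (Rabs_pos _) (H (snd p)). lra.
Qed.

Lemma lsum_cons d p L (u : Zd d -> R) : lsum (p :: L) u = fst p * u (snd p) + lsum L u.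
Proof. reflexivity. Qed.

Lemma lsum_comm d (L1 L2 : list (R * Zd d)) (H : Zd d -> Zd d -> R) :
  lsum L1 (fun x => lsum L2 (H x)) = lsum L2 (fun z => lsum L1 (fun x => H x z)).
Proof.
elim: L1 => [|p L1 IH].
- rewrite /lsum sl_nil (sl_ext _ (fun _ => 0)) ?sl_zero // => q; rewrite sl_nil; ring.
- rewrite lsum_cons IH /lsum.
  have E : forall q : R * Zd d, fst q * sl (fun x => fst x * H (snd x) (snd q)) (p :: L1)
      = fst p * (fst q * H (snd p) (snd q)) + fst q * sl (fun x => fst x * H (snd x) (snd q)) L1.
  { move=> q; rewrite sl_cons; ring. }
  rewrite (sl_ext _ _ _ E) sl_plus sl_scal. reflexivity.
Qed.

Lemma Lop_comm d T (a : coeff d) (H : Zd d -> Zd d -> R) p q :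
  Lop T a (fun x => Lop T a (fun z => H x z) q) p = Lop T a (fun z => Lop T a (fun x => H x z) p) q.
Proof.
have E1 : (fun x => Lop T a (fun z => H x z) q) = (fun x => lsum (lst T a q) (H x)).
{ apply functional_extensionality => x; apply Lop_rep. }
have E2 : (fun z => Lop T a (fun x => H x z) p) = (fun z => lsum (lst T a p) (fun x => H x z)).
{ apply functional_extensionality => z; apply Lop_rep. }
rewrite E1 E2 !Lop_rep; apply lsum_comm.
Qed.

Lemma Lsym d T (a : coeff d) p q :
  Lop T a (fun z => delta z p) q = Lop T a (fun z => delta z q) p.
Proof.
rewrite /Lop /divstar !sum_dirs_sl /grad /yb /xb /=.
rewrite (delta_sym q p). congr (_ + _). apply sl_ext => i. rewrite !add_sub.
destruct (classic (q = p)) as [->|Hqp]; first reflexivity.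
rewrite (delta_neq Hqp) (delta_neq (not_eq_sym Hqp)).
have X : forall p0 q0, a (subZd q0 (unitv i), i) * delta (subZd q0 (unitv i)) p0
                     = a (p0, i) * delta (addZd p0 (unitv i)) q0.
{ move=> p0 q0. destruct (classic (subZd q0 (unitv i) = p0)) as [E|E].
  - have E' := proj1 (sub_add_iff _ _ _) E. rewrite E delta_eq -E' delta_eq. ring.
  - rewrite (delta_neq E) delta_neq; first ring.
    move=> E'; apply E; apply/sub_add_iff; by rewrite E'. }
have := X p q; have := X q p. lra.
Qed.

Lemma Lop_lower d T (a : coeff d) u x M : in_Omega a -> (forall z, u z <= M) ->
  / T * u x + 2 * INR d * (u x - M) <= Lop T a u x.
Proof.
move=> Ha HM. rewrite /Lop /divstar sum_dirs_sl /grad /yb /xb /=.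
set S := sl _ _.
have : INR (size (enum 'I_d)) * (2 * (u x - M)) <= S.
{ rewrite /S; apply sl_ge => i. rewrite add_sub.
  have := Ha (subZd x (unitv i), i); have := Ha (x,i).
  have := HM (subZd x (unitv i)); have := HM (addZd x (unitv i)); have := HM x.
  move=> h1 h2 h3 [h4 h5] [h6 h7].
  have := Rmult_le_pos (a (subZd x (unitv i), i)) (M - u (subZd x (unitv i))) h6 ltac:(lra).
  have := Rmult_le_pos (1 - a (subZd x (unitv i), i)) (M - u x) ltac:(lra) ltac:(lra).
  have := Rmult_le_pos (a (x, i)) (M - u (addZd x (unitv i))) h4 ltac:(lra).
  have := Rmult_le_pos (1 - a (x, i)) (M - u x) ltac:(lra) ltac:(lra).
  move=> k1 k2 k3 k4. clear -k1 k2 k3 k4 h1 h2 h3 h4 h5 h6 h7. move: k1 k2 k3 k4 h1 h2 h3 h4 h5 h6 h7.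
  move: (a (subZd x (unitv i), i)) (a (x, i)) (u x) (u (subZd x (unitv i))) (u (addZd x (unitv i))) => A1 A2 U0 U1 U2.
  intros; lra. }
rewrite size_enum_ord. lra.
Qed.

Definition bounded d (u : Zd d -> R) := exists B, forall x, Rabs (u x) <= B.

Lemma MP d T (a : coeff d) u (S : list (Zd d)) K m : 0 < T -> in_Omega a -> bounded u ->
  (forall x, ~ In x S -> Lop T a u x <= K) -> T * K <= m ->
  (forall s, In s S -> u s <= m) -> forall x, u x <= m.
Proof.
move=> HT Ha [B HB] HL HK HS x0.
apply Rnot_lt_le => Hx0.
pose E := fun r => exists x, r = u x.
have Hb : bound E.
{ exists B => r [x ->]; have := HB x; have := Rle_abs (u x); lra. }
have Hne : exists r, E r by exists (u x0), x0.
case: (completeness E Hb Hne) => M [HMub HMlub].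
have HuM : forall z, u z <= M by move=> z; apply HMub; exists z.
have HM0 : u x0 <= M by apply HuM.
set D2 := 2 * INR d * T.
have HD2 : 0 <= D2 by rewrite /D2; have := pos_INR d; nra.
set eps := (M - m) / (1 + D2).
have Heps : 0 < eps by rewrite /eps; apply Rdiv_lt_0_compat; lra.
have Heps2 : eps * (1 + D2) = M - m by rewrite /eps; field; lra.
have [x Hx] : exists x, M - eps < u x.
{ apply NNPP => H. have : M <= M - eps.
  { apply HMlub => r [z ->]. apply Rnot_lt_le => Hz; apply H; exists z; lra. }
  lra. }
have Hepsm : eps <= M - m by nra.
have HxS : ~ In x S by move=> Hin; have := HS x Hin; lra.
have HLx := HL x HxS.
have HLB := @Lop_lower d T a u x M Ha HuM.
have H2 : T * (/ T * u x + 2 * INR d * (u x - M)) <= T * K.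
{ apply Rmult_le_compat_l; lra. }
have E3 : T * (/ T * u x + 2 * INR d * (u x - M)) = u x + D2 * (u x - M).
{ rewrite /D2; field; lra. }
rewrite E3 in H2.
have H1 : D2 * (u x - M) >= - (D2 * eps) by nra.
nra.
Qed.

Lemma bounded_sub d (u v : Zd d -> R) : bounded u -> bounded v -> bounded (fun x => u x - v x).
Proof.
move=> [B1 H1] [B2 H2]; exists (B1 + B2) => x.
have := Rabs_triang (u x) (- v x); rewrite Rabs_Ropp; have := H1 x; have := H2 x.
rewrite /Rminus; lra.
Qed.

Lemma uniq_Lop d T (a : coeff d) u v : 0 < T -> in_Omega a -> bounded u -> bounded v ->
  (forall x, Lop T a u x = Lop T a v x) -> forall x, u x = v x.
Proof.
move=> HT Ha Hu Hv H x.
have Hw := bounded_sub Hu Hv.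
have Hw' : bounded (fun x => - (u x - v x)).
{ case: Hw => B HB; exists B => z; rewrite Rabs_Ropp; apply HB. }
have L1 : forall z, Lop T a (fun x => u x - v x) z = 0.
{ move=> z; rewrite Lop_sub H; ring. }
have A1 := @MP d T a (fun x => u x - v x) nil 0 0 HT Ha Hw.
have A2 := @MP d T a (fun x => - (u x - v x)) nil 0 0 HT Ha Hw'.
have B1 : u x - v x <= 0.
{ apply A1 => //; [move=> z _; rewrite L1; lra | lra]. }
have B2 : - (u x - v x) <= 0.
{ apply A2 => //; [move=> z _; rewrite Lop_opp L1; lra | lra]. }
lra.
Qed.

Lemma bounded_of_ell2 d (u : Zd d -> R) : ell2 u -> bounded u.
Proof.
move=> [M HM]; exists (M + 1) => x.
have := HM (x :: nil) (NoDup_cons _ (@List.in_nil _ x) (NoDup_nil _)). rewrite /= Rplus_0_r => H.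
have := pow2_abs (u x). have := Rabs_pos (u x). move=> h1 h2.
destruct (Rle_lt_dec (Rabs (u x)) 1); nra.
Qed.

Lemma delta_bounds d (x y : Zd d) : 0 <= delta x y <= 1.
Proof. rewrite /delta; case: (Zd_eqb x y); lra. Qed.

Lemma in_Omega_upd d (a : coeff d) b t : in_Omega a -> 0 <= t <= 1 -> in_Omega (upd a b t).
Proof. move=> Ha Ht b'; rewrite /upd; case: (bond_eqb b' b) => //. Qed.

Lemma upd_self d (a : coeff d) b t : upd a b t b = t.
Proof. rewrite /upd; by rewrite (proj2 (bond_eqbP b b) (Logic.eq_refl b)). Qed.

Lemma upd_upd d (a : coeff d) b s t : upd (upd a b s) b t = upd a b t.
Proof. apply functional_extensionality => b'; rewrite /upd; by case: (bond_eqb b' b). Qed.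

Lemma upd_id d (a : coeff d) b : upd a b (a b) = a.
Proof.
apply functional_extensionality => b'; rewrite /upd.
case E: (bond_eqb b' b) => //. by move/bond_eqbP: E => ->.
Qed.

Lemma G_eq d T G (a : coeff d) : is_Green T G -> in_Omega a ->
  forall x y, Lop T a (fun z => G a z y) x = delta x y.
Proof. move=> HG Ha x y; exact: (proj2 (HG a Ha y) x). Qed.

Lemma G_bdd d T G (a : coeff d) : is_Green T G -> in_Omega a -> forall y, bounded (fun z => G a z y).
Proof. move=> HG Ha y; apply bounded_of_ell2; exact: (proj1 (HG a Ha y)). Qed.

Lemma G_nonneg d T G (a : coeff d) : 0 < T -> is_Green T G -> in_Omega a -> forall x y, 0 <= G a x y.
Proof.
move=> HT HG Ha x y.
have Hb : bounded (fun z => - G a z y).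
{ case: (G_bdd HG Ha y) => B HB; exists B => z; rewrite Rabs_Ropp; apply HB. }
have := @MP d T a (fun z => - G a z y) nil 0 0 HT Ha Hb.
move=> H. have : - G a x y <= 0.
{ apply H => //; [move=> z _; rewrite Lop_opp (G_eq HG Ha); have := delta_bounds z y; lra| lra]. }
lra.
Qed.

Lemma G_leT d T G (a : coeff d) : 0 < T -> is_Green T G -> in_Omega a -> forall x y, G a x y <= T.
Proof.
move=> HT HG Ha x y.
apply (@MP d T a (fun z => G a z y) nil 1 T HT Ha (G_bdd HG Ha y)) => //.
- move=> z _; rewrite (G_eq HG Ha); have := delta_bounds z y; lra.
- lra.
Qed.

Lemma G_abs d T G (a : coeff d) : 0 < T -> is_Green T G -> in_Omega a -> forall x y, Rabs (G a x y) <= T.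
Proof.
move=> HT HG Ha x y; rewrite Rabs_pos_eq; [apply: G_leT| apply: G_nonneg]; eauto.
Qed.

Lemma G_le_diag d T G (a : coeff d) : 0 < T -> is_Green T G -> in_Omega a -> forall x y, G a x y <= G a y y.
Proof.
move=> HT HG Ha x y.
apply (@MP d T a (fun z => G a z y) (y :: nil) 0 (G a y y) HT Ha (G_bdd HG Ha y)).
- move=> z Hz; rewrite (G_eq HG Ha) delta_neq; first lra.
  move=> E; apply Hz; left; by rewrite E.
- rewrite Rmult_0_r; exact: (G_nonneg HT HG Ha).
- move=> s [<-|[]]; lra.
Qed.

Lemma G_diag_pos d T G (a : coeff d) : 0 < T -> is_Green T G -> in_Omega a -> forall y, 0 < G a y y.
Proof.
move=> HT HG Ha y. apply Rnot_le_lt => H.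
have E : (fun z => G a z y) = (fun _ => 0).
{ apply functional_extensionality => z; have := G_le_diag HT HG Ha z y; have := G_nonneg HT HG Ha z y; lra. }
have := G_eq HG Ha y y. rewrite E Lop_zero delta_eq. lra.
Qed.

Lemma G_strict d T G (a : coeff d) : 0 < T -> is_Green T G -> in_Omega a ->
  forall x y, x <> y -> G a x y < G a y y.
Proof.
move=> HT HG Ha x y Hxy. apply Rnot_le_lt => H.
have H1 : G a x y = G a y y by have := G_le_diag HT HG Ha x y; lra.
have := @Lop_lower d T a (fun z => G a z y) x (G a y y) Ha (fun z => G_le_diag HT HG Ha z y).
rewrite (G_eq HG Ha) (delta_neq Hxy) /= H1.
have := G_diag_pos HT HG Ha y. have := Rinv_0_lt_compat T HT.
move: (G a y y) (/ T) => g iT h1 h2. nra.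
Qed.

Lemma G_sym d T G (a : coeff d) : 0 < T -> is_Green T G -> in_Omega a ->
  forall x y, G a x y = G a y x.
Proof.
move=> HT HG Ha.
have Hw : forall q x, Lop T a (fun z => G a x z) q = delta x q.
{ move=> q.
  apply (@uniq_Lop d T a (fun x => Lop T a (fun z => G a x z) q) (fun x => delta x q) HT Ha).
  - exists (sl (fun p => Rabs (fst p)) (lst T a q) * T) => x.
    rewrite Lop_rep; apply lsum_bound => z; apply: G_abs; eauto.
  - exists 1 => x; rewrite Rabs_pos_eq; have := delta_bounds x q; lra.
  - move=> p. rewrite (@Lop_comm d T a (fun x z => G a x z) p q).
    have -> : (fun z => Lop T a (fun x => G a x z) p) = (fun z => delta z p).
    { apply functional_extensionality => z; by rewrite (G_eq HG Ha) delta_sym. }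
    apply Lsym. }
move=> x y.
apply (@uniq_Lop d T a (fun z => G a x z) (fun z => G a z x) HT Ha).
- exists T => z; apply: G_abs; eauto.
- exact: (G_bdd HG Ha x).
- move=> q; by rewrite Hw (G_eq HG Ha) delta_sym.
Qed.

Lemma xb_neq_yb d (b : bond d) : xb b <> yb b.
Proof. rewrite /xb /yb => E; apply: (@add_neq d (fst b) (snd b)); by rewrite -E. Qed.

Lemma g_pos d T G (a : coeff d) b : 0 < T -> is_Green T G -> in_Omega a -> 0 < ggG G a b b.
Proof.
move=> HT HG Ha. rewrite /ggG.
have := G_strict HT HG Ha (@xb_neq_yb d b).
have := G_strict HT HG Ha (not_eq_sym (@xb_neq_yb d b)).
lra.
Qed.

Definition kf d (G : coeff d -> Zd d -> Zd d -> R) a (b : bond d) (x : Zd d) : R :=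
  G a x (yb b) - G a x (xb b).

Lemma bounded_lin d (u v : Zd d -> R) al be : bounded u -> bounded v ->
  bounded (fun z => al * u z + be * v z).
Proof.
move=> [B1 H1] [B2 H2]; exists (Rabs al * B1 + Rabs be * B2) => x.
apply (Rle_trans _ _ _ (Rabs_triang _ _)); rewrite !Rabs_mult.
have := Rmult_le_compat_l _ _ _ (Rabs_pos al) (H1 x).
have := Rmult_le_compat_l _ _ _ (Rabs_pos be) (H2 x). lra.
Qed.

Lemma kf_bdd d T G (a : coeff d) b : 0 < T -> is_Green T G -> in_Omega a -> bounded (kf G a b).
Proof.
move=> HT HG Ha. have := bounded_lin 1 (-1) (G_bdd HG Ha (yb b)) (G_bdd HG Ha (xb b)).
move=> [B HB]; exists B => x; have := HB x; rewrite /kf.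
have -> : 1 * G a x (yb b) + -1 * G a x (xb b) = G a x (yb b) - G a x (xb b) by ring. done.
Qed.

Lemma Lop_kf d T G (a : coeff d) b : is_Green T G -> in_Omega a ->
  forall x, Lop T a (kf G a b) x = hfun b x.
Proof.
move=> HG Ha x.
rewrite /kf (@Lop_sub d T a (fun z => G a z (yb b)) (fun z => G a z (xb b)) x) !(G_eq HG Ha).
by rewrite /hfun.
Qed.

Lemma grad_kf d G (a : coeff d) b : grad (kf G a b) b = ggG G a b b.
Proof. rewrite /grad /kf /ggG; ring. Qed.

Lemma Gpert d T G (a : coeff d) b t : 0 < T -> is_Green T G -> in_Omega a -> 0 <= t <= 1 ->
  1 + (t - a b) * ggG G a b b <> 0 ->
  forall x y, G (upd a b t) x y
   = G a x y - (t - a b) * gradG G a b y / (1 + (t - a b) * ggG G a b b) * kf G a b x.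
Proof.
move=> HT HG Ha Ht HD x y.
have Ha' := in_Omega_upd b Ha Ht.
set c := (t - a b) * gradG G a b y / (1 + (t - a b) * ggG G a b b).
have := @uniq_Lop d T (upd a b t) (fun z => G (upd a b t) z y)
  (fun z => 1 * G a z y + (- c) * kf G a b z) HT Ha' (G_bdd HG Ha' y)
  (bounded_lin 1 (-c) (G_bdd HG Ha y) (kf_bdd b HT HG Ha)).
move=> H. rewrite H; [ring|].
move=> z. rewrite (G_eq HG Ha') Lop_lin !Lop_pert (G_eq HG Ha) (Lop_kf b HG Ha) grad_kf.
have -> : grad (fun z0 => G a z0 y) b = gradG G a b y by [].
rewrite /c. field. done.
Qed.

Lemma corr_eq d T ev phi (a : coeff d) : is_mod_corrector T ev phi -> in_Omega a ->
  forall z, Lop T a (phi a) z = - divstar (fun b => a b * ebond ev b) z.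
Proof.
move=> [_ [HP _]] Ha z. have := HP a Ha z.
have -> : (fun b => a b * (grad (phi a) b + ebond ev b)) = (fun b => a b * grad (phi a) b + a b * ebond ev b).
{ apply functional_extensionality => b; ring. }
rewrite divstar_plus /Lop. lra.
Qed.

Lemma phi_pert d T G ev phi (a : coeff d) b t : 0 < T -> is_Green T G -> is_mod_corrector T ev phi ->
  in_Omega a -> 0 <= t <= 1 ->
  1 + (t - a b) * ggG G a b b <> 0 ->
  forall x, phi (upd a b t) x
   = phi a x - (t - a b) * (grad (phi a) b + ebond ev b) / (1 + (t - a b) * ggG G a b b) * kf G a b x.
Proof.
move=> HT HG HP Ha Ht HD x.
have Ha' := in_Omega_upd b Ha Ht.
have Hbd : forall a, in_Omega a -> bounded (phi a).
{ move=> a0 Ha0; case: HP => _ [_ H3]; case: (H3 a0 Ha0) => C HC; by exists C. }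
set c := (t - a b) * (grad (phi a) b + ebond ev b) / (1 + (t - a b) * ggG G a b b).
have := @uniq_Lop d T (upd a b t) (phi (upd a b t))
  (fun z => 1 * phi a z + (- c) * kf G a b z) HT Ha' (Hbd _ Ha')
  (bounded_lin 1 (-c) (Hbd _ Ha) (kf_bdd b HT HG Ha)).
move=> H. rewrite H; [ring|].
move=> z. rewrite (corr_eq HP Ha') Lop_lin !Lop_pert (corr_eq HP Ha) (Lop_kf b HG Ha) grad_kf.
rewrite (@divstar_pert d a b t (ebond ev) z).
rewrite /c. field. done.
Qed.

Lemma lim_helper (Q q : R -> R) x0 l (S : R -> Prop) :
  (forall t, S t -> Q t = q t) -> ex_derive q x0 -> q x0 = l ->
  filterlim Q (within S (locally x0)) (locally l).
Proof.
move=> HQ Hd <-.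
apply (filterlim_ext_loc q Q).
- rewrite /within; apply filter_forall => t Ht; by rewrite HQ.
- apply (filterlim_filter_le_1 (F := locally x0)); [apply filter_le_within|].
  exact (@ex_derive_continuous R_AbsRing R_NormedModule q x0 Hd).
Qed.

Lemma ggG_pert d T G (a : coeff d) b t : 0 < T -> is_Green T G -> in_Omega a -> 0 <= t <= 1 ->
  1 + (t - a b) * ggG G a b b <> 0 ->
  ggG G (upd a b t) b b = ggG G a b b / (1 + (t - a b) * ggG G a b b).
Proof.
move=> HT HG Ha Ht HD. have E := Gpert HT HG Ha Ht HD.
rewrite {1}/ggG !E /kf /gradG /ggG. move: HD; rewrite /ggG => HD. field; done.
Qed.

Lemma gradG_pert d T G (a : coeff d) b t y : 0 < T -> is_Green T G -> in_Omega a -> 0 <= t <= 1 ->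
  1 + (t - a b) * ggG G a b b <> 0 ->
  gradG G (upd a b t) b y = gradG G a b y / (1 + (t - a b) * ggG G a b b).
Proof.
move=> HT HG Ha Ht HD. have E := Gpert HT HG Ha Ht HD.
rewrite {1}/gradG !E /kf /gradG /ggG. move: HD; rewrite /ggG => HD. field; done.
Qed.

Lemma gradphi_pert d T G ev phi (a : coeff d) b t : 0 < T -> is_Green T G -> is_mod_corrector T ev phi ->
  in_Omega a -> 0 <= t <= 1 ->
  1 + (t - a b) * ggG G a b b <> 0 ->
  grad (phi (upd a b t)) b + ebond ev b = (grad (phi a) b + ebond ev b) / (1 + (t - a b) * ggG G a b b).
Proof.
move=> HT HG HP Ha Ht HD. have E := phi_pert HT HG HP Ha Ht HD.
rewrite {1}/grad !E /kf /ggG. move: HD; rewrite /ggG => HD. rewrite /grad. field; done.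
Qed.

Lemma one_minus_pos d T G (a : coeff d) b : 0 < T -> is_Green T G -> in_Omega a ->
  0 < 1 - a b * ggG G a b b.
Proof.
move=> HT HG Ha.
have Ha0 := in_Omega_upd b Ha (ltac:(lra) : 0 <= 0 <= 1).
have Hg0 := g_pos b HT HG Ha0.
have Hab := Ha b.
have Hz : upd a b 0 b = 0 by apply upd_self.
have HD : 1 + (a b - upd a b 0 b) * ggG G (upd a b 0) b b <> 0.
{ rewrite Hz. nra. }
have := ggG_pert HT HG Ha0 Hab HD.
rewrite upd_upd upd_id Hz => ->.
move: Hg0 HD; rewrite Hz; move: (ggG G (upd a b 0) b b) => g0 Hg0 HD.
have HD' : 0 < 1 + (a b - 0) * g0 by nra.
apply (Rmult_lt_reg_r (1 + (a b - 0) * g0)) => //.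
have -> : (1 - a b * (g0 / (1 + (a b - 0) * g0))) * (1 + (a b - 0) * g0) = 1 by field; lra.
lra.
Qed.

Theorem lemma7 (d : nat) (ev : 'I_d -> R) (T : R)
  (G : coeff d -> Zd d -> Zd d -> R) (phi : coeff d -> Zd d -> R) (b : bond d) :
  is_unit_vector ev -> 0 < T ->
  is_Green T G -> is_mod_corrector T ev phi ->
  forall a : coeff d, in_Omega a ->
    has_pderiv (fun a' => phi a' (@origin d)) a b
      (- gradG G a b (@origin d) * (grad (phi a) b + ebond ev b)) /\
    has_pderiv (fun a' => - gradG G a' b (@origin d) * (grad (phi a') b + ebond ev b)) a b
      (- 2 * ggG G a b b * (- gradG G a b (@origin d) * (grad (phi a) b + ebond ev b))) /\
    has_pderiv (fun a' => ggG G a' b b) a b (- (ggG G a b b) ^ 2) /\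
    0 < ggG G a b b /\
    0 < 1 - a b * ggG G a b b.
Proof.
move=> _ HT HG HP a Ha.
have Hg := g_pos b HT HG Ha.
have H1m := one_minus_pos b HT HG Ha.
have Hab := Ha b.
have HDp : forall t, 0 <= t <= 1 -> 0 < 1 + (t - a b) * ggG G a b b.
{ move=> t Ht. nra. }
have HDn : forall t, 0 <= t <= 1 -> 1 + (t - a b) * ggG G a b b <> 0.
{ move=> t Ht; have := HDp t Ht; lra. }
have Hk0 : kf G a b (@origin d) = gradG G a b (@origin d).
{ rewrite /kf /gradG !(G_sym HT HG Ha (@origin d)). done. }
split; [|split; [|split; [|split]]]; try done.
- rewrite /has_pderiv.
  apply (@lim_helper _ (fun t => - (grad (phi a) b + ebond ev b) * kf G a b (@origin d)
                                   / (1 + (t - a b) * ggG G a b b)) _ _ _).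
  + move=> t [Ht Hne]. rewrite (phi_pert HT HG HP Ha Ht (HDn t Ht)).
    have := HDn t Ht => HD. field. repeat split => //; by apply Rminus_eq_contra.
  + auto_derive. rewrite Rplus_opp_r Rmult_0_l Rplus_0_r. lra.
  + rewrite Rminus_eq_0 Rmult_0_l Rplus_0_r Hk0. field.
- rewrite /has_pderiv.
  apply (@lim_helper _ (fun t => gradG G a b (@origin d) * (grad (phi a) b + ebond ev b)
          * ggG G a b b * (2 + (t - a b) * ggG G a b b) / (1 + (t - a b) * ggG G a b b) ^ 2) _ _ _).
  + move=> t [Ht Hne].
    rewrite (gradG_pert _ HT HG Ha Ht (HDn t Ht)) (gradphi_pert HT HG HP Ha Ht (HDn t Ht)).
    have := HDn t Ht => HD. field. repeat split => //; by apply Rminus_eq_contra.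
  + auto_derive. rewrite Rplus_opp_r Rmult_0_l Rplus_0_r. lra.
  + rewrite Rminus_eq_0 Rmult_0_l Rplus_0_r. field.
- rewrite /has_pderiv.
  apply (@lim_helper _ (fun t => - (ggG G a b b) ^ 2 / (1 + (t - a b) * ggG G a b b)) _ _ _).
  + move=> t [Ht Hne].
    rewrite (ggG_pert HT HG Ha Ht (HDn t Ht)).
    have := HDn t Ht => HD. field. repeat split => //; by apply Rminus_eq_contra.
  + auto_derive. rewrite Rplus_opp_r Rmult_0_l Rplus_0_r. lra.
  + rewrite Rminus_eq_0 Rmult_0_l Rplus_0_r. field.
Qed.
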